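(* Let $A$ be a non-empty set, $\xi:B_{\ell_\infty(A)}\to\mathbb R$ a weak$^*$-continuous function (weak$^*$ topology from $\ell_\infty(A)=\ell_1(A)^*$), and $\phi\in\ell_\infty(A)^*$ with decomposition $\phi=\phi_0+\phi_1$, where $\phi_0\in\ell_1(A)$ (acting by $\phi_0(x^* )=\sum_a\phi_0(a)x^*(a)$) and $\phi_1\in\ell_\infty(A)^*$ vanishes on all finitely supported elements of $\ell_\infty(A)$. If $\xi(x^* )\le g_\phi(x^* )$ for all $x^*\in B_{\ell_\infty(A)}$, then $\xi(x^* )\le g_{\phi_0}(x^* )$ for all $x^*\in B_{\ell_\infty(A)}$.
   Context: For a linear functional $\psi$ on $\ell_\infty(A)$, $g_\psi:\ell_\infty(A)\to\mathbb R_+$ is defined by $g_\psi(x^* )=|\psi(|x^*|)|$. Every $\phi\in\ell_\infty(A)^*$ decomposes uniquely as $\phi=\phi_0+\phi_1$ as described. *)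

(* Defs.v *)
From HB Require Import structures.
From mathcomp Require Import all_boot all_order all_algebra.
From mathcomp Require Import boolp classical_sets cardinality reals ereal esum.
Set Implicit Arguments. Unset Strict Implicit. Unset Printing Implicit Defensive.
Import Order.TTheory GRing.Theory Num.Theory.
Local Open Scope ring_scope.
Local Open Scope classical_set_scope.

Section Linfty.
Variables (R : realType) (A : choiceType).

Definition linf (x : A -> R) : Prop := exists M : R, forall a, `|x a| <= M.

Definition inball (x : A -> R) : Prop := forall a, `|x a| <= 1.

Definition l1 (f : A -> R) : Prop := summable [set: A] (fun a => (f a)%:E).

Definition lsum (f : A -> R) : R :=
  fine (\esum_(a in [set: A]) (Num.max (f a) 0)%:E)
  - fine (\esum_(a in [set: A]) (Num.max (- f a) 0)%:E).

Definition l1act (f x : A -> R) : R := lsum (fun a => f a * x a).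

Definition linf_dual (psi : (A -> R) -> R) : Prop :=
  (forall (x y : A -> R) (s t : R), linf x -> linf y ->
     psi (fun a => s * x a + t * y a) = s * psi x + t * psi y) /\
  (exists C : R, forall (x : A -> R) (M : R),
     (forall a, `|x a| <= M) -> `|psi x| <= C * M).

Definition finsupp (x : A -> R) : Prop := finite_set [set a | x a != 0].

Definition gfun (psi : (A -> R) -> R) (x : A -> R) : R :=
  `|psi (fun a => `|x a|)|.

(* xi is continuous on B_{l_infty(A)} for the (relative) weak* topology
   sigma(l_infty(A), l_1(A)), via the standard neighbourhood basis
   { y | |<f_i, y - x>| < d, i < n }, f_i in l_1(A). *)
Definition wstar_cont_ball (xi : (A -> R) -> R) : Prop :=
  forall x, inball x -> forall e : R, 0 < e ->
    exists (n : nat) (F : 'I_n -> A -> R) (d : R),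
      [/\ 0 < d, (forall i, l1 (F i)) &
        forall y, inball y ->
          (forall i, `|l1act (F i) y - l1act (F i) x| < d) ->
          `|xi y - xi x| < e].

End Linfty.

(* Main.v *)
From HB Require Import structures.
From mathcomp Require Import all_boot all_order all_algebra.
From mathcomp Require Import boolp classical_sets cardinality reals ereal esum.
From mathcomp Require Import lra.
Require Import Defs.
Import Order.TTheory GRing.Theory Num.Theory.
Local Open Scope ring_scope.
Local Open Scope classical_set_scope.

Section H.
Variables (R : realType) (A : choiceType).

Lemma tail_mono (f : A -> R) (S T : set A) : S `<=` T ->
  (\esum_(a in ~` T) `|(f a)%:E| <= \esum_(a in ~` S) `|(f a)%:E|)%E.
Proof.
move=> ST; rewrite esum_mkcond [X in (_ <= X)%E]esum_mkcond.
apply: le_esum => a _.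
case: ifPn => aT; case: ifPn => aS //.
- by move: aT aS; rewrite !in_setC => /negP aT; rewrite negbK => /set_mem /ST /mem_set.

Qed.

Lemma tail_exists (f : A -> R) (e : R) : l1 f -> 0 < e ->
  exists S, finite_set S /\ forall T, S `<=` T ->
    (\esum_(a in ~` T) `|(f a)%:E| < e%:E)%E.
Proof.
move=> hf e0.
have hfin : (\esum_(a in [set: A]) `|(f a)%:E|)%E \is a fin_num.
  by rewrite -summableE.
set Sg := (\esum_(a in [set: A]) `|(f a)%:E|)%E in hfin *.
have : (Sg - e%:E < Sg)%E.
  by rewrite -(fineK hfin) -EFinB lte_fin; lra.
move=> H; have [y [X [finX _] <-] hy] := ereal_sup_gt H.
exists X; split => // T XT.
apply: le_lt_trans (@tail_mono f X T XT) _.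
have hsplit := esumID X [set: A] (fun a => `|(f a)%:E|)%E (fun _ _ => abse_ge0 _).
rewrite setTI (@esum_fset _ _ X) in hsplit; [|exact: finX|by move=> *; exact: abse_ge0].
rewrite -/Sg in hsplit.
have t0 : (0 <= \esum_(a in [set: A] `&` ~` X) `|(f a)%:E|)%E.
  by apply: esum_ge0 => *; exact: abse_ge0.
have s0 : (0 <= \sum_(i \in X) `|(f i)%:E|)%E.
  by apply: fsume_ge0 => *; exact: abse_ge0.
have tle : (\esum_(a in [set: A] `&` ~` X) `|(f a)%:E| <= Sg)%E.
  by rewrite hsplit leeDr.
have sle : (\sum_(i \in X) `|(f i)%:E| <= Sg)%E.
  by rewrite hsplit leeDl.
have tfin : (\esum_(a in [set: A] `&` ~` X) `|(f a)%:E|)%E \is a fin_num.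
  by rewrite ge0_fin_numE // (le_lt_trans tle) // -ge0_fin_numE // (le_trans t0 tle).
have sfin : (\sum_(i \in X) `|(f i)%:E|)%E \is a fin_num.
  by rewrite ge0_fin_numE // (le_lt_trans sle) // -ge0_fin_numE // (le_trans s0 sle).
rewrite setTI in hsplit tfin *.
move: hy; rewrite hsplit -(fineK tfin) -(fineK sfin).
move: (fine _) (fine _) => u v.
rewrite -EFinD !lte_fin.
lra.
Qed.

Lemma esum_le_total (f w : A -> R) (S : set A) :
  (forall a, 0 <= w a <= `|f a|) ->
  (\esum_(a in S) (w a)%:E <= \esum_(a in [set: A]) `|(f a)%:E|)%E.
Proof.
move=> hw; rewrite esum_mkcond; apply: le_esum => a _.
have /andP[w0 wf] := hw a.
by case: ifPn => _; rewrite abse_EFin lee_fin // (le_trans w0 wf).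
Qed.
Arguments esum_le_total {f w} S.

Lemma esum_fin (f w : A -> R) (S : set A) : l1 f ->
  (forall a, 0 <= w a <= `|f a|) ->
  (\esum_(a in S) (w a)%:E)%E \is a fin_num.
Proof.
move=> hf hw.
have hfin : (\esum_(a in [set: A]) `|(f a)%:E|)%E \is a fin_num.
  by rewrite -summableE.
have e0 : (0 <= \esum_(a in S) (w a)%:E)%E.
  by apply: esum_ge0 => a _; rewrite lee_fin; case/andP: (hw a).
rewrite ge0_fin_numE // (le_lt_trans (esum_le_total S hw)) //.
Qed.
Arguments esum_fin {f w} S.

Lemma part (f u v : A -> R) (T : set A) : l1 f ->
  (forall a, 0 <= u a <= `|f a|) ->
  (forall a, T a -> v a = u a) -> (forall a, ~ T a -> v a = 0) ->
  0 <= fine (\esum_(a in [set: A]) (u a)%:E) - fine (\esum_(a in [set: A]) (v a)%:E)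
    <= fine (\esum_(a in ~` T) `|(f a)%:E|)%E.
Proof.
move=> hf hu hvT hvC.
have hv : forall a, 0 <= v a <= `|f a|.
  move=> a; case: (pselect (T a)) => Ta; first by rewrite hvT.
  by rewrite hvC // lexx normr_ge0.
have hu' := esumID T [set: A] (fun a => (u a)%:E) (fun a _ => proj1 (andP (hu a))).
have hv' := esumID T [set: A] (fun a => (v a)%:E) (fun a _ => proj1 (andP (hv a))).
rewrite !setTI in hu' hv'.
rewrite hu' hv'.
have -> : (\esum_(i in T) (v i)%:E = \esum_(i in T) (u i)%:E)%E.
  by apply: eq_esum => a Ta; rewrite hvT.
have -> : (\esum_(i in ~` T) (v i)%:E = 0)%E.
  by apply: esum1 => a Ta; rewrite hvC.
rewrite adde0 fineD ?(esum_fin _ hf hu) // addrC addKr.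
apply/andP; split.
  by apply: fine_ge0; apply: esum_ge0 => a _; rewrite lee_fin; case/andP: (hu a).
apply: fine_le; first exact: (esum_fin _ hf hu).
  by apply: (esum_fin _ hf) => a; rewrite normr_ge0 lexx.
apply: le_esum => a _; rewrite abse_EFin lee_fin; by case/andP: (hu a).
Qed.

Lemma lsum_diff (f g h : A -> R) (T : set A) (e : R) : l1 f ->
  (forall a, `|g a| <= `|f a|) ->
  (forall a, T a -> h a = g a) -> (forall a, ~ T a -> h a = 0) ->
  (\esum_(a in ~` T) `|(f a)%:E| < e%:E)%E ->
  `|lsum g - lsum h| < e.
Proof.
move=> hf hg hT hC he.
have hpos : forall a, 0 <= Num.max (g a) 0 <= `|f a|.
  move=> a; rewrite le_max lexx orbT /= ge_max normr_ge0 andbT.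
  exact: le_trans (ler_norm _) (hg a).
have hneg : forall a, 0 <= Num.max (- g a) 0 <= `|f a|.
  move=> a; rewrite le_max lexx orbT /= ge_max normr_ge0 andbT.
  by apply: le_trans (hg a); rewrite -normrN ler_norm.
have h1 := @part f (fun a => Num.max (g a) 0) (fun a => Num.max (h a) 0) T hf hpos (fun a Ta => congr1 (fun z => Num.max z 0) (hT a Ta))
  (fun a Ta => etrans (congr1 (fun z => Num.max z 0) (hC a Ta)) (maxxx _)).
have h2 := @part f (fun a => Num.max (- g a) 0) (fun a => Num.max (- h a) 0) T hf hneg (fun a Ta => congr1 (fun z => Num.max (- z) 0) (hT a Ta))
  (fun a Ta => etrans (congr1 (fun z => Num.max (- z) 0) (hC a Ta)) (etrans (congr1 (fun z => Num.max z 0) (@oppr0 R)) (maxxx _))).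
have tfin : (\esum_(a in ~` T) `|(f a)%:E|)%E \is a fin_num.
  by apply: (esum_fin _ hf) => a; rewrite normr_ge0 lexx.
move: he; rewrite -(fineK tfin) lte_fin.
move: h1 h2; rewrite /lsum.
move: (fine _) (fine _) (fine _) (fine _) (fine _) => a1 a2 a3 a4 t.
move=> /andP[h1 h1'] /andP[h2 h2'] he; rewrite ltr_norml; apply/andP; split; lra.
Qed.
End H.
Arguments tail_exists {R A f e}.

Theorem lemma4p9 (R : realType) (A : choiceType) (a0 : A)
  (xi : (A -> R) -> R) (phi phi1 : (A -> R) -> R) (phi0 : A -> R) :
  wstar_cont_ball xi ->
  linf_dual phi ->
  l1 phi0 ->
  linf_dual phi1 ->
  (forall x, linf x -> finsupp x -> phi1 x = 0) ->
  (forall x, linf x -> phi x = l1act phi0 x + phi1 x) ->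
  (forall x, inball x -> xi x <= gfun phi x) ->
  forall x, inball x -> xi x <= gfun (l1act phi0) x.
Proof.
move=> hxi _ hphi0 _ hfs hdec hle x hx.
apply/ler_addgt0Pr => e e0.
have e20 : 0 < e / 2 by lra.
have [n [F [d [d0 hF hcont]]]] := hxi x hx (e / 2) e20.
have [Sf hSf] := choice (fun i => tail_exists (hF i) d0).
have [S0 [fS0 hS0]] := tail_exists hphi0 e20.
pose S := S0 `|` \bigcup_(i in [set: 'I_n]) Sf i.
have finS : finite_set S.
  rewrite /S finite_setU; split => //.
  by apply: bigcup_finite => [|i _]; [exact: finite_finset|exact: (hSf i).1].
pose xS := fun a => if a \in S then x a else 0.
have hxS : inball xS.
  by move=> a; rewrite /xS; case: ifP => _; [exact: hx|rewrite normr0 ler01].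
have xST : forall a, S a -> xS a = x a by move=> a Sa; rewrite /xS mem_set.
have xSC : forall a, ~ S a -> xS a = 0 by move=> a Sa; rewrite /xS memNset.
have c1 : `|xi xS - xi x| < e / 2.
  apply: hcont => // i; rewrite distrC.
  apply: (@lsum_diff R A (F i) (fun a => F i a * x a) (fun a => F i a * xS a) S).
  - exact: hF.
  - by move=> a; rewrite normrM ler_piMr.
  - by move=> a Sa; rewrite xST.
  - by move=> a Sa; rewrite xSC // mulr0.
  - apply: (hSf i).2 => a Sa; right; exists i => //.
have c2 : `|l1act phi0 (fun a => `|x a|) - l1act phi0 (fun a => `|xS a|)| < e / 2.
  apply: (@lsum_diff R A phi0 (fun a => phi0 a * `|x a|) (fun a => phi0 a * `|xS a|) S).
  - exact: hphi0.
  - by move=> a; rewrite normrM normr_id ler_piMr.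
  - by move=> a Sa; rewrite xST.
  - by move=> a Sa; rewrite xSC // normr0 mulr0.
  - by apply: hS0 => a Sa; left.
have c3 : xi xS <= `|l1act phi0 (fun a => `|xS a|)|.
  apply: (le_trans (hle xS hxS)); rewrite /gfun hdec.
    rewrite hfs ?addr0 //.
      by exists 1 => a; rewrite normr_id.
    apply: sub_finite_set finS => a /= /negP ha.
    by apply: contra_notP ha => Sa; rewrite xSC // normr0.
  by exists 1 => a; rewrite normr_id.
rewrite /gfun.
set p1 := l1act phi0 (fun a => `|x a|) in c2 *.
set p2 := l1act phi0 (fun a => `|xS a|) in c2 c3 *.
have := ler_normD p1 (p2 - p1); rewrite addrC subrK => c4.
move: c1 c2; rewrite !ltr_norml => /andP[c1 c1'] /andP[c2 c2'].
have : `|p2 - p1| < e / 2 by rewrite distrC ltr_norml; apply/andP; split; lra.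
lra.
Qed.
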